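(* Let $P=(X,\prec)$ be a finite twin-free interval order with no induced subposet isomorphic to $Z$. Let $\mathcal I=\{I(z)=[L(z),R(z)]:z\in X\}$ be a closed interval representation of $P$ such that (1) no interval strictly contains two other intervals, (2) no interval is strictly contained in two other intervals, (3) whenever $I(u)\subsetneq I(v)$ there are unique $x,y\in X$ with $x$ peeking into $vu$ from the left and $y$ peeking into $vu$ from the right, and moreover all peekers have been retracted, i.e. $\mathcal I$ was obtained from such a representation by, for every proper inclusion $I(u)\subsetneq I(v)$, replacing the interval of its left peeker $x$ by $[L(x),L(v)]$ and the interval of its right peeker $y$ by $[R(v),R(y)]$. For each proper inclusion $I(u)\subsetneq I(v)$, replace $I(u)$ by the open interval $(L(v),R(v))$ (leaving intervals of elements that are not inner intervals of a proper inclusion unchanged). Then the resulting set of intervals is a strict OC interval representation of $P$.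
   Context: Posets are strict (irreflexive) partial orders; twins are points with exactly the same comparabilities; twin-free means no two distinct twins. A closed interval representation assigns a closed real interval $[L(x),R(x)]$ to each $x$ with $x\prec y$ iff $R(x)<L(y)$; $P$ is an interval order if one exists. $I(u)$ is strictly contained in $I(v)$ if $I(u)\subset I(v)$ and they do not have identical endpoints. For $I(u)\subsetneq I(v)$: $x$ peeks into $vu$ if $I(x)$ meets $I(v)$ but not $I(u)$; from the left if moreover $R(x)\le L(u)$; from the right if moreover $R(u)\le L(x)$. An OC interval representation assigns to each $x$ an open or closed real interval $I(x)$ with $x\prec y$ iff every point of $I(x)$ is less than every point of $I(y)$; it is strict if no interval is strictly contained in another. $Z$ is the poset on $a,b,c,d,x,y$ with $a\prec b\prec c\prec d$, $x\prec d$, $a\prec y$ (and transitive consequences), all other pairs incomparable. *)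

(* Defs.v *)
From mathcomp Require Import all_boot.
From Stdlib Require Import Reals.
Set Implicit Arguments. Unset Strict Implicit. Unset Printing Implicit Defensive.
Local Open Scope R_scope.

Section Posets.
Variable X : finType.
Variable prec : X -> X -> Prop.

Definition strict_poset : Prop :=
  (forall x, ~ prec x x) /\ (forall x y z, prec x y -> prec y z -> prec x z).

Definition twins (x y : X) : Prop :=
  forall z, (prec x z <-> prec y z) /\ (prec z x <-> prec z y).

Definition twin_free : Prop := forall x y, twins x y -> x = y.

Definition closed_rep (L Rr : X -> R) : Prop :=
  (forall x, L x <= Rr x) /\ (forall x y, prec x y <-> Rr x < L y).

Definition interval_order : Prop := exists L Rr, closed_rep L Rr.
End Posets.

(* The poset Z on {a,b,c,d,x,y}: a<b<c<d, x<d, a<y, plus transitive consequences *)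
Inductive Zpt := Za | Zb | Zc | Zd | Zx | Zy.

Definition Zrel (p q : Zpt) : Prop :=
  match p, q with
  | Za, Zb | Za, Zc | Za, Zd | Zb, Zc | Zb, Zd | Zc, Zd => True
  | Zx, Zd => True
  | Za, Zy => True
  | _, _ => False
  end.

Definition contains_Z (X : finType) (prec : X -> X -> Prop) : Prop :=
  exists f : Zpt -> X, (forall p q, f p = f q -> p = q) /\
    (forall p q, Zrel p q <-> prec (f p) (f q)).

Section Closed.
Variable X : Type.
Variables L Rr : X -> R.

Definition cstrict_sub (u v : X) : Prop :=
  L v <= L u /\ Rr u <= Rr v /\ (L u <> L v \/ Rr u <> Rr v).

Definition cmeets (x y : X) : Prop := L x <= Rr y /\ L y <= Rr x.

Definition peeks (x v u : X) : Prop := cmeets x v /\ ~ cmeets x u.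
Definition peeks_left (x v u : X) : Prop := peeks x v u /\ Rr x <= L u.
Definition peeks_right (x v u : X) : Prop := peeks x v u /\ Rr u <= L x.

Definition no_two_inside : Prop :=
  ~ exists v u1 u2, u1 <> u2 /\ cstrict_sub u1 v /\ cstrict_sub u2 v.
Definition no_two_outside : Prop :=
  ~ exists u v1 v2, v1 <> v2 /\ cstrict_sub u v1 /\ cstrict_sub u v2.
Definition unique_peekers : Prop :=
  forall u v, cstrict_sub u v ->
    (exists x, peeks_left x v u /\ forall x', peeks_left x' v u -> x' = x) /\
    (exists y, peeks_right y v u /\ forall y', peeks_right y' v u -> y' = y).

Definition good_rep : Prop := no_two_inside /\ no_two_outside /\ unique_peekers.
End Closed.

Definition retracted_from (X : Type) (L0 R0 L Rr : X -> R) : Prop :=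
  (forall u v x, cstrict_sub L0 R0 u v -> peeks_left L0 R0 x v u ->
     L x = L0 x /\ Rr x = L0 v) /\
  (forall u v y, cstrict_sub L0 R0 u v -> peeks_right L0 R0 y v u ->
     L y = R0 v /\ Rr y = R0 y) /\
  (forall z, ~ (exists u v, cstrict_sub L0 R0 u v /\
                  (peeks_left L0 R0 z v u \/ peeks_right L0 R0 z v u)) ->
     L z = L0 z /\ Rr z = R0 z).

Record oc_interval := OC { oc_open : bool; oc_l : R; oc_r : R }.

Definition oc_wf (I : oc_interval) : Prop :=
  if oc_open I then oc_l I < oc_r I else oc_l I <= oc_r I.

Definition in_oc (p : R) (I : oc_interval) : Prop :=
  if oc_open I then oc_l I < p < oc_r I else oc_l I <= p <= oc_r I.

Definition oc_strict_sub (A B : oc_interval) : Prop :=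
  (forall p, in_oc p A -> in_oc p B) /\ (oc_l A <> oc_l B \/ oc_r A <> oc_r B).

Definition oc_rep (X : Type) (prec : X -> X -> Prop) (J : X -> oc_interval) : Prop :=
  (forall x, oc_wf (J x)) /\
  (forall x y, prec x y <->
     (forall p q, in_oc p (J x) -> in_oc q (J y) -> p < q)).

Definition strict_oc_rep (X : Type) (prec : X -> X -> Prop) (J : X -> oc_interval) : Prop :=
  oc_rep prec J /\ (forall u v, ~ oc_strict_sub (J u) (J v)).

(* Main.v *)
Require Import Defs.
From mathcomp Require Import all_boot.
From Stdlib Require Import Reals.
From Stdlib Require Import Lra Classical.
Local Open Scope R_scope.

Lemma oc_before (A B : oc_interval) : oc_wf A -> oc_wf B ->
  ((forall p q, in_oc p A -> in_oc q B -> p < q) <->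
   (if oc_open A || oc_open B then oc_r A <= oc_l B else oc_r A < oc_l B)).
Proof.
  destruct A as [[|] la ra], B as [[|] lb rb]; unfold oc_wf, in_oc; simpl;
    intros HA HB; split.
  - intro H. destruct (Rle_dec ra lb) as [h|h]; [exact h|exfalso].
    destruct (Rlt_dec la rb) as [h2|h2].
    + destruct (Rle_dec la lb), (Rle_dec ra rb).
      * specialize (H ((lb+ra)/2) ((lb+ra)/2)). lra.
      * specialize (H ((lb+rb)/2) ((lb+rb)/2)). lra.
      * specialize (H ((la+ra)/2) ((la+ra)/2)). lra.
      * specialize (H ((la+rb)/2) ((la+rb)/2)). lra.
    + specialize (H ((la+ra)/2) ((lb+rb)/2)). lra.
  - intros H p q Hp Hq; lra.
  - intro H. destruct (Rle_dec ra lb) as [h|h]; [exact h|exfalso].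
    destruct (Rle_dec la lb).
    + specialize (H ((lb+ra)/2) lb). lra.
    + specialize (H ((la+ra)/2) lb). lra.
  - intros H p q Hp Hq; lra.
  - intro H. destruct (Rle_dec ra lb) as [h|h]; [exact h|exfalso].
    destruct (Rle_dec ra rb).
    + specialize (H ra ((lb+ra)/2)). lra.
    + specialize (H ra ((lb+rb)/2)). lra.
  - intros H p q Hp Hq; lra.
  - intro H. specialize (H ra lb). lra.
  - intros H p q Hp Hq; lra.
Qed.

Lemma open_sub (l1 r1 : R) (B : oc_interval) : l1 < r1 -> oc_wf B ->
  (forall p, l1 < p < r1 -> in_oc p B) -> oc_l B <= l1 /\ r1 <= oc_r B.
Proof.
  destruct B as [[|] l2 r2]; unfold oc_wf, in_oc; simpl; intros H1 H2 H;
  split; apply Rnot_lt_le; intro Hc.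
  - destruct (Rle_dec l2 r1).
    + specialize (H ((l1+l2)/2)); lra.
    + specialize (H ((l1+r1)/2)); lra.
  - destruct (Rle_dec l1 r2).
    + specialize (H ((r2+r1)/2)); lra.
    + specialize (H ((l1+r1)/2)); lra.
  - destruct (Rle_dec l2 r1).
    + specialize (H ((l1+l2)/2)); lra.
    + specialize (H ((l1+r1)/2)); lra.
  - destruct (Rle_dec l1 r2).
    + specialize (H ((r2+r1)/2)); lra.
    + specialize (H ((l1+r1)/2)); lra.
Qed.

Lemma closed_sub (l1 r1 : R) (B : oc_interval) : l1 <= r1 ->
  (forall p, l1 <= p <= r1 -> in_oc p B) ->
  (if oc_open B then oc_l B < l1 /\ r1 < oc_r B else oc_l B <= l1 /\ r1 <= oc_r B).
Proof.
  destruct B as [[|] l2 r2]; unfold in_oc; simpl; intros H1 H;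
  pose proof (H l1) as Ha; pose proof (H r1) as Hb; lra.
Qed.

Lemma Z_tf (p q : Zpt) : (forall r, Zrel p r <-> Zrel q r) ->
  (forall r, Zrel r p <-> Zrel r q) -> p = q.
Proof.
  destruct p, q; intros H1 H2; try reflexivity; exfalso;
  first [ specialize (H1 Za); simpl in H1; tauto
        | specialize (H1 Zb); simpl in H1; tauto
        | specialize (H1 Zc); simpl in H1; tauto
        | specialize (H1 Zd); simpl in H1; tauto
        | specialize (H1 Zx); simpl in H1; tauto
        | specialize (H1 Zy); simpl in H1; tauto
        | specialize (H2 Za); simpl in H2; tauto
        | specialize (H2 Zb); simpl in H2; tauto
        | specialize (H2 Zc); simpl in H2; tauto
        | specialize (H2 Zd); simpl in H2; tauto
        | specialize (H2 Zx); simpl in H2; tauto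
        | specialize (H2 Zy); simpl in H2; tauto ].
Qed.

Lemma shrink (X : Type) (L0 R0 L Rr : X -> R) :
  retracted_from L0 R0 L Rr -> forall z, L0 z <= L z /\ Rr z <= R0 z.
Proof.
  intros [H1 [H2 H3]] z.
  destruct (classic (exists u v, cstrict_sub L0 R0 u v /\
                  (peeks_left L0 R0 z v u \/ peeks_right L0 R0 z v u))) as
    [[u [v [Hs [Hp|Hp]]]] | Hn].
  - destruct (H1 u v z Hs Hp) as [e1 e2]. destruct Hp as [[[m1 m2] _] _]. lra.
  - destruct (H2 u v z Hs Hp) as [e1 e2]. destruct Hp as [[[m1 m2] _] _]. lra.
  - destruct (H3 z Hn). lra.
Qed.


Lemma peeks_right_prec (X : finType) (prec : X -> X -> Prop) (L Rr : X -> R) (z v u : X) :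
  closed_rep prec L Rr -> peeks_right L Rr z v u ->
  prec u z /\ ~ prec v z /\ ~ prec z v.
Proof.
  intros [Hw Hp] [[[m1 m2] Hn] Hle].
  pose proof (Hw u); pose proof (Hw z).
  split; [| split; rewrite Hp; lra].
  apply Hp. destruct (Rlt_dec (Rr u) (L z)) as [h|h]; [exact h|].
  exfalso; apply Hn; unfold cmeets; lra.
Qed.
Arguments peeks_right_prec {X prec L Rr z v u}.

Lemma peeks_left_prec (X : finType) (prec : X -> X -> Prop) (L Rr : X -> R) (z v u : X) :
  closed_rep prec L Rr -> peeks_left L Rr z v u ->
  prec z u /\ ~ prec z v /\ ~ prec v z.
Proof.
  intros [Hw Hp] [[[m1 m2] Hn] Hle].
  pose proof (Hw u); pose proof (Hw z).
  split; [| split; rewrite Hp; lra].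
  apply Hp. destruct (Rlt_dec (Rr z) (L u)) as [h|h]; [exact h|].
  exfalso; apply Hn; unfold cmeets; lra.
Qed.
Arguments peeks_left_prec {X prec L Rr z v u}.

Lemma inner_info (X : finType) (prec : X -> X -> Prop) (L Rr : X -> R) (u v : X) :
  closed_rep prec L Rr -> good_rep L Rr -> cstrict_sub L Rr u v ->
  L v < L u /\ Rr u < Rr v /\
  (exists x, prec x u /\ ~ prec x v /\ ~ prec v x) /\
  (exists y, prec u y /\ ~ prec v y /\ ~ prec y v).
Proof.
  intros Hr [_ [_ Hu]] Hs.
  destruct (Hu u v Hs) as [[x [Hx _]] [y [Hy _]]].
  pose proof (peeks_left_prec Hr Hx) as [a [b c]].
  pose proof (peeks_right_prec Hr Hy) as [d [e f]].
  destruct Hr as [Hw Hp].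
  apply Hp in a; apply Hp in d; rewrite Hp in b; rewrite Hp in c;
  rewrite Hp in e; rewrite Hp in f.
  pose proof (Hw x); pose proof (Hw y); pose proof (Hw u).
  split; [lra|]. split; [lra|]. split.
  - exists x; rewrite !Hp; repeat split; lra.
  - exists y; rewrite !Hp; repeat split; lra.
Qed.
Arguments inner_info {X prec L Rr u v}.

Lemma transfer (X : finType) (prec : X -> X -> Prop) (L Rr L0 R0 : X -> R) (u v : X) :
  closed_rep prec L Rr -> good_rep L Rr -> closed_rep prec L0 R0 ->
  cstrict_sub L Rr u v -> cstrict_sub L0 R0 u v /\ L0 v < L0 u /\ R0 u < R0 v.
Proof.
  intros Hr Hg [Hw Hp] Hs.
  destruct (inner_info Hr Hg Hs) as [_ [_ [[x [a [b c]]] [y [d [e f]]]]]].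
  apply Hp in a; apply Hp in d; rewrite Hp in b; rewrite Hp in c;
  rewrite Hp in e; rewrite Hp in f.
  pose proof (Hw x); pose proof (Hw y); pose proof (Hw u).
  unfold cstrict_sub; lra.
Qed.
Arguments transfer {X prec L Rr L0 R0 u v}.

Lemma A_right (X : finType) (prec : X -> X -> Prop) (L Rr L0 R0 : X -> R) (u v z : X) :
  closed_rep prec L Rr -> good_rep L Rr -> closed_rep prec L0 R0 ->
  retracted_from L0 R0 L Rr ->
  cstrict_sub L Rr u v -> prec u z -> ~ prec v z -> L z = Rr v.
Proof.
  intros Hr Hg Hr0 Hret Hs Huz Hvz.
  destruct (transfer Hr Hg Hr0 Hs) as [Hs0 [a b]].
  destruct (inner_info Hr Hg Hs) as [c [d _]].
  pose proof (@shrink _ _ _ _ _ Hret v) as [s1 s2].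
  pose proof Hr as [Hw Hp]. pose proof Hr0 as [Hw0 Hp0].
  assert (Huz0 : R0 u < L0 z) by (apply Hp0; exact Huz).
  assert (Hvz0 : L0 z <= R0 v) by (apply Rnot_lt_le; intro h; apply Hvz; apply Hp0; exact h).
  assert (Huz1 : Rr u < L z) by (apply Hp; exact Huz).
  assert (Hvz1 : L z <= Rr v) by (apply Rnot_lt_le; intro h; apply Hvz; apply Hp; exact h).
  pose proof (Hw z); pose proof (Hw u); pose proof (Hw0 z); pose proof (Hw0 u).
  assert (Hzv0 : L0 v <= R0 z).
  { apply Rnot_lt_le; intro h. apply Hp0 in h. apply Hp in h. lra. }
  assert (Hpr : peeks_right L0 R0 z v u).
  { unfold peeks_right, peeks, cmeets. split; [split; [split|] |]; try lra.
    }
  destruct Hret as [_ [HR2 _]]. destruct (HR2 u v z Hs0 Hpr) as [e1 e2]. lra.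
Qed.
Arguments A_right {X prec L Rr L0 R0 u v z}.

Lemma A_left (X : finType) (prec : X -> X -> Prop) (L Rr L0 R0 : X -> R) (u v z : X) :
  closed_rep prec L Rr -> good_rep L Rr -> closed_rep prec L0 R0 ->
  retracted_from L0 R0 L Rr ->
  cstrict_sub L Rr u v -> prec z u -> ~ prec z v -> Rr z = L v.
Proof.
  intros Hr Hg Hr0 Hret Hs Huz Hvz.
  destruct (transfer Hr Hg Hr0 Hs) as [Hs0 [a b]].
  destruct (inner_info Hr Hg Hs) as [c [d _]].
  pose proof (@shrink _ _ _ _ _ Hret v) as [s1 s2].
  pose proof Hr as [Hw Hp]. pose proof Hr0 as [Hw0 Hp0].
  assert (Huz0 : R0 z < L0 u) by (apply Hp0; exact Huz).
  assert (Hvz0 : L0 v <= R0 z) by (apply Rnot_lt_le; intro h; apply Hvz; apply Hp0; exact h).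
  assert (Huz1 : Rr z < L u) by (apply Hp; exact Huz).
  assert (Hvz1 : L v <= Rr z) by (apply Rnot_lt_le; intro h; apply Hvz; apply Hp; exact h).
  pose proof (Hw z); pose proof (Hw u); pose proof (Hw0 z); pose proof (Hw0 u).
  assert (Hzv0 : L0 z <= R0 v).
  { apply Rnot_lt_le; intro h. apply Hp0 in h. apply Hp in h. lra. }
  assert (Hpr : peeks_left L0 R0 z v u).
  { unfold peeks_left, peeks, cmeets. split; [split; [split|] |]; try lra.
    }
  destruct Hret as [HR1 _]. destruct (HR1 u v z Hs0 Hpr) as [e1 e2]. lra.
Qed.
Arguments A_left {X prec L Rr L0 R0 u v z}.

Theorem proposition15 (X : finType) (prec : X -> X -> Prop)
  (Hpo : strict_poset prec) (Htf : twin_free prec) (Hio : interval_order prec)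
  (HnoZ : ~ contains_Z prec)
  (L Rr : X -> R) (Hrep : closed_rep prec L Rr) (Hgood : good_rep L Rr)
  (Hretr : exists L0 R0 : X -> R, closed_rep prec L0 R0 /\ good_rep L0 R0 /\
             retracted_from L0 R0 L Rr)
  (J : X -> oc_interval)
  (HJin : forall u v, cstrict_sub L Rr u v -> J u = OC true (L v) (Rr v))
  (HJout : forall z, ~ (exists v, cstrict_sub L Rr z v) -> J z = OC false (L z) (Rr z)) :
  strict_oc_rep prec J.
Proof.
  destruct Hretr as [L0 [R0 [Hr0 [Hg0 Hret]]]].
  pose proof Hrep as [Hw Hp].
  pose proof Hgood as [Hni [Hno Hup]].
  assert (Hcl : forall x, (exists v, cstrict_sub L Rr x v /\ J x = OC true (L v) (Rr v)
      /\ L v < L x /\ Rr x < Rr v /\ L v < Rr v) \/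
      (~ (exists v, cstrict_sub L Rr x v) /\ J x = OC false (L x) (Rr x))).
  { intro x. destruct (classic (exists v, cstrict_sub L Rr x v)) as [[v Hv]|Hn].
    - left. exists v. destruct (inner_info Hrep Hgood Hv) as [a [b _]].
      pose proof (Hw x). split; [exact Hv|]. split; [apply HJin; exact Hv|]. lra.
    - right. split; [exact Hn| apply HJout; exact Hn]. }
  assert (Hwf : forall x, oc_wf (J x)).
  { intro x; destruct (Hcl x) as [[v [_ [e [_ [_ h]]]]]|[_ e]]; rewrite e; unfold oc_wf; simpl.
    - exact h.
    - apply Hw. }
  split; [split|].
  - exact Hwf.
  - intros x y. rewrite (oc_before (J x) (J y) (Hwf x) (Hwf y)).
    pose proof (Hw x) as wx; pose proof (Hw y) as wy.
    destruct (Hcl x) as [[v [Hxv [ex [x1 [x2 x3]]]]]|[Hxn ex]];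
    destruct (Hcl y) as [[w [Hyw [ey [y1 [y2 y3]]]]]|[Hyn ey]]; rewrite ex ey; simpl.
    + pose proof (Hw v) as wv; pose proof (Hw w) as ww.
      split.
      * intro Hxy. assert (Hxy' : Rr x < L y) by (apply Hp; exact Hxy).
        destruct (classic (prec x w)) as [Hxw|Hxw].
        -- destruct (classic (prec v w)) as [Hvw|Hvw].
           ++ apply Hp in Hvw; lra.
           ++ pose proof (A_right Hrep Hgood Hr0 Hret Hxv Hxw Hvw). lra.
        -- pose proof (A_left Hrep Hgood Hr0 Hret Hyw Hxy Hxw) as e1.
           exfalso.
           destruct (Rle_dec (Rr w) (Rr v)) as [h1|h1].
           ++ apply Hni. exists v, x, w. split; [intro e; subst; lra|].
              split; [exact Hxv|]. unfold cstrict_sub; lra.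
           ++ destruct (Hup x v Hxv) as [[xx [Hxx _]] [yy [Hyy _]]].
              destruct (Rlt_dec (Rr v) (L y)) as [h2|h2].
              ** destruct (peeks_right_prec Hrep Hyy) as [p1 [p2 p3]].
                 pose proof (A_right Hrep Hgood Hr0 Hret Hxv p1 p2) as e2.
                 pose proof (Hw yy) as wyy.
                 destruct (Rle_dec (Rr yy) (Rr w)) as [h3|h3].
                 --- apply Hni. exists w, yy, y. split; [intro e; subst; lra|].
                     split; [unfold cstrict_sub; lra| exact Hyw].
                 --- apply Hno. exists y, w, yy. split; [intro e; subst; lra|].
                     split; [exact Hyw| unfold cstrict_sub; lra].
              ** destruct (peeks_left_prec Hrep Hxx) as [q1 [q2 q3]].
                 pose proof (A_left Hrep Hgood Hr0 Hret Hxv q1 q2) as e3.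
                 destruct (Hup y w Hyw) as [_ [yw [Hyw2 _]]].
                 destruct (peeks_right_prec Hrep Hyw2) as [r1 [r2 r3]].
                 pose proof (A_right Hrep Hgood Hr0 Hret Hyw r1 r2) as e4.
                 pose proof (Hw xx) as wxx; pose proof (Hw yw) as wyw.
                 apply HnoZ.
                 pose (f := fun p : Zpt => match p with
                   | Za => xx | Zb => x | Zc => y | Zd => yw | Zx => v | Zy => w end).
                 assert (Hrel : forall p q, Zrel p q <-> prec (f p) (f q)).
                 { intros p q; destruct p, q; unfold f; simpl; split; intro h;
                   first [ exact I | contradiction | apply Hp; lra
                         | apply Hp in h; lra ]. }
                 exists f; split; [|exact Hrel].
                 intros p q e. apply Z_tf; intro r; split; intro h.
                 { apply Hrel; apply Hrel in h; rewrite <- e; exact h. }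
                 { apply Hrel; apply Hrel in h; rewrite e; exact h. }
                 { apply Hrel; apply Hrel in h; rewrite <- e; exact h. }
                 { apply Hrel; apply Hrel in h; rewrite e; exact h. }
      * intro h; apply Hp; lra.
    + split.
      * intro Hxy. destruct (classic (prec v y)) as [h|h].
        -- apply Hp in h; lra.
        -- pose proof (A_right Hrep Hgood Hr0 Hret Hxv Hxy h); lra.
      * intro h; apply Hp; lra.
    + split.
      * intro Hxy. destruct (classic (prec x w)) as [h|h].
        -- apply Hp in h; lra.
        -- pose proof (A_left Hrep Hgood Hr0 Hret Hyw Hxy h); lra.
      * intro h; apply Hp; lra.
    + apply Hp.
  - intros u v [Hsub Hne].
    pose proof (Hw u) as wu; pose proof (Hw v) as wv.
    destruct (Hcl u) as [[a [Hua [eu [u1 [u2 u3]]]]]|[Hun eu]];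
    destruct (Hcl v) as [[b [Hvb [ev [v1 [v2 v3]]]]]|[Hvn ev]];
    rewrite eu ev in Hsub Hne; simpl in Hne.
    + destruct (open_sub (L a) (Rr a) (OC true (L b) (Rr b)) u3 v3 Hsub) as [s1 s2]; simpl in s1, s2.
      apply Hno. exists u, a, b. split; [intro e; subst; tauto|].
      split; [exact Hua|]. unfold cstrict_sub; lra.
    + destruct (open_sub (L a) (Rr a) (OC false (L v) (Rr v)) u3 wv Hsub) as [s1 s2]; simpl in s1, s2.
      apply Hni. exists v, a, u. split; [intro e; subst; lra|].
      split; unfold cstrict_sub; lra.
    + pose proof (closed_sub (L u) (Rr u) (OC true (L b) (Rr b)) wu Hsub) as [s1 s2]; simpl in s1, s2.
      apply Hun. exists b. unfold cstrict_sub; lra.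
    + pose proof (closed_sub (L u) (Rr u) (OC false (L v) (Rr v)) wu Hsub) as [s1 s2]; simpl in s1, s2.
      apply Hun. exists v. unfold cstrict_sub; split; [lra|]. split; [lra|]. exact Hne.
Qed.
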